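(* Let $\Gamma$ be a countably infinite discrete group, $\Delta\subset\Gamma$ a nonamenable subgroup, and let $f\in\mathbb{Z}\Gamma$ satisfy $\{v\in\ell^2(\Gamma,\mathbb{R}): v\cdot f=0\}=\{0\}$. If $c\colon\Delta\to\mathbb{Z}\Gamma$ is a $1$-cocycle such that the map $\delta\mapsto c(\delta)f$ is a coboundary (i.e. there is $b'\in\mathbb{Z}\Gamma$ with $c(\delta)f=b'-\delta b'$ for all $\delta\in\Delta$), then $c$ is a coboundary, i.e. there is $b\in\mathbb{Z}\Gamma$ with $c(\delta)=b-\delta b$ for all $\delta\in\Delta$.
   Context: $\mathbb{Z}\Gamma$ is a left $\mathbb{Z}\Delta$-module by left multiplication; a $1$-cocycle $c\colon\Delta\to\mathbb{Z}\Gamma$ satisfies $c(\delta\delta')=c(\delta)+\delta c(\delta')$. For $v\in\ell^2(\Gamma,\mathbb{R})$ and $f\in\mathbb{Z}\Gamma$, $(v\cdot f)_\gamma=\sum_{\gamma'}v_{\gamma'}f_{\gamma'^{-1}\gamma}$. *)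

(* Defs.v *)
From Stdlib Require Import Reals ZArith List Classical ClassicalDescription.
Import ListNotations.
Set Implicit Arguments.

Record is_group (G : Type) (mul : G -> G -> G) (inv : G -> G) (e : G) : Prop := {
  grp_assoc : forall x y z, mul x (mul y z) = mul (mul x y) z;
  grp_id_l : forall x, mul e x = x;
  grp_id_r : forall x, mul x e = x;
  grp_inv_l : forall x, mul (inv x) x = e;
  grp_inv_r : forall x, mul x (inv x) = e }.

Definition countably_infinite (G : Type) : Prop :=
  exists enum : nat -> G,
    (forall m n, enum m = enum n -> m = n) /\ (forall g, exists n, enum n = g).

Definition is_subgroup (G : Type) (mul : G -> G -> G) (inv : G -> G) (e : G)
  (D : G -> Prop) : Prop :=
  D e /\ (forall x y, D x -> D y -> D (mul x y)) /\ (forall x, D x -> D (inv x)).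

Definition pb (P : Prop) : bool :=
  if excluded_middle_informative P then true else false.

Definition count_in (G : Type) (P : G -> Prop) (l : list G) : nat :=
  length (filter (fun x => pb (P x)) l).

(** Følner-type amenability of the subgroup D (as a discrete group):
    for every finite S ⊆ D and ε > 0 there is a finite nonempty F ⊆ D with
    |sF Δ F| < ε |F| for all s ∈ S.  Here |sF Δ F| = |sF \ F| + |F \ sF|,
    computed as #{x ∈ F | s x ∉ F} + #{x ∈ F | s⁻¹ x ∉ F}. *)
Definition amenable_subgroup (G : Type) (mul : G -> G -> G) (inv : G -> G)
  (D : G -> Prop) : Prop :=
  forall (S : list G) (eps : R), (forall s, In s S -> D s) -> (0 < eps)%R ->
  exists F : list G,
    NoDup F /\ F <> [] /\ (forall x, In x F -> D x) /\
    forall s, In s S ->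
      (INR (count_in (fun x => ~ In (mul s x) F) F
            + count_in (fun x => ~ In (mul (inv s) x) F) F)
       < eps * INR (length F))%R.

(** The integral group ring ZΓ: elements are finite formal sums Σ n_i g_i,
    represented as lists of pairs (g_i, n_i); the element is determined by
    its coefficient function. *)
Definition ZG (G : Type) := list (G * Z).

Definition coeff (G : Type) (x : ZG G) (g : G) : Z :=
  fold_right (fun p acc => ((if pb (fst p = g) then snd p else 0) + acc)%Z) 0%Z x.

Definition zg_eq (G : Type) (x y : ZG G) : Prop := forall g, coeff x g = coeff y g.

Definition zg_add (G : Type) (x y : ZG G) : ZG G := x ++ y.
Definition zg_opp (G : Type) (x : ZG G) : ZG G := map (fun p => (fst p, (- snd p)%Z)) x.
Definition zg_sub (G : Type) (x y : ZG G) : ZG G := zg_add x (zg_opp y).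

Definition zg_mul (G : Type) (mul : G -> G -> G) (x y : ZG G) : ZG G :=
  flat_map (fun p => map (fun q => (mul (fst p) (fst q), (snd p * snd q)%Z)) y) x.

Definition zg_lact (G : Type) (mul : G -> G -> G) (d : G) (x : ZG G) : ZG G :=
  map (fun p => (mul d (fst p), snd p)) x.

Definition is_cocycle (G : Type) (mul : G -> G -> G) (D : G -> Prop)
  (c : G -> ZG G) : Prop :=
  forall d d', D d -> D d' ->
    zg_eq (c (mul d d')) (zg_add (c d) (zg_lact mul d (c d'))).

Definition is_coboundary (G : Type) (mul : G -> G -> G) (D : G -> Prop)
  (a : G -> ZG G) : Prop :=
  exists b : ZG G, forall d, D d -> zg_eq (a d) (zg_sub b (zg_lact mul d b)).

Definition sumR (l : list R) : R := fold_right Rplus 0%R l.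

Definition in_l2 (G : Type) (v : G -> R) : Prop :=
  exists M : R, forall l : list G, NoDup l -> (sumR (map (fun g => v g ^ 2) l) <= M)%R.

(** Right action of ZΓ on ℓ²:  (v·f)_γ = Σ_{γ'} v_{γ'} f_{γ'^{-1}γ}.
    For f = Σ n_i h_i this equals Σ_i n_i v_{γ h_i^{-1}}. *)
Definition l2_act (G : Type) (mul : G -> G -> G) (inv : G -> G)
  (v : G -> R) (f : ZG G) (g : G) : R :=
  sumR (map (fun p => (v (mul g (inv (fst p))) * IZR (snd p))%R) f).

(* Main.v *)
Require Import Defs.
From Stdlib Require Import Reals ZArith List Lra Lia Psatz Classical ClassicalEpsilon ClassicalDescription Permutation FunctionalExtensionality.
Import ListNotations.
Open Scope R_scope.


Section Sums.
Context {G : Type}.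

Definition eqd (x y : G) : {x = y} + {x <> y} := excluded_middle_informative (x = y).

Lemma sumR_app l1 l2 : sumR (l1 ++ l2) = sumR l1 + sumR l2.
Proof. induction l1; simpl; [lra|]. rewrite IHl1; lra. Qed.

Lemma sumR_perm l1 l2 : Permutation l1 l2 -> sumR l1 = sumR l2.
Proof. induction 1; simpl; lra. Qed.

Lemma sumR_plus {A} (F H : A -> R) l :
  sumR (map (fun x => F x + H x) l) = sumR (map F l) + sumR (map H l).
Proof. induction l; simpl; lra. Qed.

Lemma sumR_scal {A} a (F : A -> R) l :
  sumR (map (fun x => a * F x) l) = a * sumR (map F l).
Proof. induction l; simpl; lra. Qed.

Lemma sumR_le {A} (F H : A -> R) l :
  (forall x, In x l -> F x <= H x) -> sumR (map F l) <= sumR (map H l).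
Proof. induction l; simpl; intros; [lra|].
  assert (F a <= H a) by auto. assert (sumR (map F l) <= sumR (map H l)) by auto. lra. Qed.

Lemma sumR_ext {A} (F H : A -> R) l :
  (forall x, In x l -> F x = H x) -> sumR (map F l) = sumR (map H l).
Proof. induction l; simpl; intros; auto. rewrite H0, IHl; auto. Qed.

Lemma sumR_zero {A} (F : A -> R) l :
  (forall x, In x l -> F x = 0) -> sumR (map F l) = 0.
Proof. induction l; simpl; intros; auto. rewrite H, IHl; auto; lra. Qed.

Lemma sumR_nonneg {A} (F : A -> R) l :
  (forall x, In x l -> 0 <= F x) -> 0 <= sumR (map F l).
Proof. intros. rewrite <- (sumR_zero (fun _ => 0) l) by auto.
  apply sumR_le; auto. Qed.

Lemma sumR_map_map {A B} (F : B -> R) (h : A -> B) l :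
  sumR (map F (map h l)) = sumR (map (fun x => F (h x)) l).
Proof. rewrite map_map; auto. Qed.

Lemma sumR_exchange {A B} (F : A -> B -> R) l1 l2 :
  sumR (map (fun x => sumR (map (fun y => F x y) l2)) l1) =
  sumR (map (fun y => sumR (map (fun x => F x y) l1)) l2).
Proof. induction l1; simpl.
  - rewrite sumR_zero; auto.
  - rewrite IHl1. rewrite (sumR_plus (fun y => F a y)). reflexivity. Qed.

Definition covers (l : list G) (v : G -> R) := forall g, v g <> 0 -> In g l.
Definition finsupp (v : G -> R) := exists l, covers l v.

Definition nzb (v : G -> R) (g : G) : bool := if Req_EM_T (v g) 0 then false else true.

Lemma sum_filter (v : G -> R) l :
  sumR (map v l) = sumR (map v (filter (nzb v) l)).
Proof. induction l; simpl; auto. unfold nzb at 1. destruct (Req_EM_T (v a) 0); simpl.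
  - rewrite e, IHl; lra. - rewrite IHl; auto. Qed.

Lemma sum_indep (v : G -> R) l1 l2 : NoDup l1 -> NoDup l2 -> covers l1 v -> covers l2 v ->
  sumR (map v l1) = sumR (map v l2).
Proof. intros N1 N2 C1 C2. rewrite (sum_filter v l1), (sum_filter v l2).
  apply sumR_perm, Permutation_map, NoDup_Permutation; try apply NoDup_filter; auto.
  intro x; rewrite !filter_In; unfold nzb; destruct (Req_EM_T (v x) 0); split; intros [? ?]; 
  try discriminate; split; auto. Qed.

Definition fsum (v : G -> R) : R :=
  match excluded_middle_informative (exists l, NoDup l /\ covers l v) with
  | left H => sumR (map v (proj1_sig (constructive_indefinite_description _ H)))
  | right _ => 0 end.

Lemma fsum_eq v l : NoDup l -> covers l v -> fsum v = sumR (map v l).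
Proof. intros N C. unfold fsum. destruct excluded_middle_informative as [H|H].
  - destruct (constructive_indefinite_description _ H) as [l' [N' C']]; simpl.
    apply sum_indep; auto.
  - exfalso; apply H; eauto. Qed.

Lemma covers_nodup l v : covers l v -> covers (nodup eqd l) v.
Proof. intros C g H; apply nodup_In; auto. Qed.

Lemma covers_app_l l1 l2 v : covers l1 v -> covers (l1 ++ l2) v.
Proof. intros C g H; apply in_or_app; auto. Qed.
Lemma covers_app_r l1 l2 v : covers l2 v -> covers (l1 ++ l2) v.
Proof. intros C g H; apply in_or_app; auto. Qed.

Lemma fs_common u v : finsupp u -> finsupp v ->
  exists l, NoDup l /\ covers l u /\ covers l v.
Proof. intros [l1 C1] [l2 C2]. exists (nodup eqd (l1 ++ l2)). split; [apply NoDup_nodup|].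
  split; apply covers_nodup; [apply covers_app_l|apply covers_app_r]; auto. Qed.

Lemma fs_cover u : finsupp u -> exists l, NoDup l /\ covers l u.
Proof. intros H; destruct (fs_common u u H H) as [l [? [? ?]]]; eauto. Qed.

Lemma fs_plus u v : finsupp u -> finsupp v -> finsupp (fun x => u x + v x).
Proof. intros [l1 C1] [l2 C2]; exists (l1 ++ l2); intros g H.
  destruct (Req_EM_T (u g) 0). - apply in_or_app; right; apply C2; lra. - apply in_or_app; left; auto. Qed.

Lemma fs_mul_l u v : finsupp v -> finsupp (fun x => u x * v x).
Proof. intros [l C]; exists l; intros g H; apply C; intro E; rewrite E in H; lra. Qed.
Lemma fs_mul_r u v : finsupp u -> finsupp (fun x => u x * v x).
Proof. intros [l C]; exists l; intros g H; apply C; intro E; rewrite E in H; lra. Qed.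

Lemma fs_ext u v : finsupp u -> (forall x, u x = v x) -> finsupp v.
Proof. intros [l C] E; exists l; intros g H; apply C; rewrite E; auto. Qed.

Lemma fs_zero : finsupp (fun _ => 0).
Proof. exists nil; intros g H; lra. Qed.

Lemma fsum_cov u l : NoDup l -> covers l u -> fsum u = sumR (map u l).
Proof. apply fsum_eq. Qed.

Lemma cov_plus l u v : covers l u -> covers l v -> covers l (fun x => u x + v x).
Proof. intros C1 C2 g H. destruct (Req_EM_T (u g) 0); [apply C2; lra| apply C1; auto]. Qed.

Lemma fsum_plus u v : finsupp u -> finsupp v -> fsum (fun x => u x + v x) = fsum u + fsum v.
Proof. intros Hu Hv; destruct (fs_common u v Hu Hv) as [l [N [C1 C2]]].
  rewrite !(fsum_eq _ l); auto. apply sumR_plus. apply cov_plus; auto. Qed.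

Lemma fsum_scal a u : finsupp u -> fsum (fun x => a * u x) = a * fsum u.
Proof. intros Hu; destruct (fs_cover u Hu) as [l [N C]].
  rewrite !(fsum_eq _ l); auto. apply sumR_scal.
  intros g H; apply C; intro E; rewrite E in H; lra. Qed.

Lemma fsum_le u v : finsupp u -> finsupp v -> (forall x, u x <= v x) -> fsum u <= fsum v.
Proof. intros Hu Hv H; destruct (fs_common u v Hu Hv) as [l [N [C1 C2]]].
  rewrite !(fsum_eq _ l); auto. apply sumR_le; auto. Qed.

Lemma fsum_zero : fsum (fun _ => 0) = 0.
Proof. rewrite (fsum_eq _ nil); simpl; auto. constructor. intros g H; lra. Qed.

Lemma fsum_nonneg u : finsupp u -> (forall x, 0 <= u x) -> 0 <= fsum u.
Proof. intros Hu H; rewrite <- fsum_zero; apply fsum_le; auto using fs_zero. Qed.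

Lemma fsum_ext u v : (forall x, u x = v x) -> fsum u = fsum v.
Proof. intros H; replace v with u; auto; apply functional_extensionality; auto. Qed.

Lemma fsum_reindex (s t : G -> G) u : (forall x, s (t x) = x) -> (forall x, t (s x) = x) ->
  finsupp u -> fsum (fun x => u (s x)) = fsum u.
Proof. intros st ts Hu. destruct (fs_cover u Hu) as [l [N C]].
  rewrite (fsum_eq u l); auto. rewrite (fsum_eq _ (map t l)).
  - rewrite sumR_map_map. apply sumR_ext; intros; rewrite st; auto.
  - apply NoDup_map_inv with (f := s). rewrite map_map.
    erewrite map_ext by (intros; apply st). rewrite map_id. auto.
  - intros g H. rewrite <- (ts g). apply in_map; auto. Qed.

Lemma fs_reindex (s t : G -> G) u : (forall x, t (s x) = x) -> finsupp u -> finsupp (fun x => u (s x)).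
Proof. intros ts [l C]. exists (map t l). intros g H. rewrite <- (ts g). apply in_map; auto. Qed.

Lemma fs_sumlist {A} (F : A -> G -> R) L : (forall p, In p L -> finsupp (F p)) ->
  finsupp (fun x => sumR (map (fun p => F p x) L)).
Proof. induction L; simpl; intros. apply fs_zero.
  apply fs_plus; auto. Qed.

Lemma fsum_sumlist {A} (F : A -> G -> R) L : (forall p, In p L -> finsupp (F p)) ->
  fsum (fun x => sumR (map (fun p => F p x) L)) = sumR (map (fun p => fsum (F p)) L).
Proof. induction L; simpl; intros. apply fsum_zero.
  rewrite fsum_plus; auto. rewrite IHL; auto. apply fs_sumlist; auto. Qed.

End Sums.

Lemma sq_sum_le {A} (F : A -> R) l :
  (sumR (map F l))^2 <= INR (length l) * sumR (map (fun x => F x ^2) l).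
Proof. induction l as [|a l IH]. simpl; lra.
  change (length (a::l)) with (S (length l)); rewrite S_INR, !map_cons.
  change (sumR (?x :: ?y)) with (x + sumR y).
  set (s := sumR (map F l)) in *. set (q := sumR (map (fun x => F x ^ 2) l)) in *.
  set (m := INR (length l)) in *.
  assert (Hm : 0 <= m) by apply pos_INR.
  assert (Hq : 0 <= q) by (apply sumR_nonneg; intros; nra).
  destruct (Req_dec m 0) as [E|E].
  - rewrite E in IH. assert (s = 0) by nra. rewrite H, E. nra.
  - assert (2 * F a * s <= m * F a ^2 + s^2 / m).
    { assert (0 < m) by (destruct Hm; [auto| exfalso; apply E; auto]). 
      assert (0 <= (m * F a - s)^2 / m) by (unfold Rdiv; apply Rmult_le_pos; [apply pow2_ge_0| apply Rlt_le, Rinv_0_lt_compat; auto]).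
      assert ((m * F a - s)^2 / m = m * F a ^2 - 2 * F a * s + s^2/m) by (field; auto).
      lra. }
    assert (0 < m) by (destruct Hm; [auto| exfalso; apply E; auto]).
    assert (s^2 / m <= q). { apply Rmult_le_reg_l with m. lra.
      replace (m * (s^2/m)) with (s^2) by (field; auto). lra. }
    nra. Qed.

Section Grp.
Context {G : Type}.
Variables (mul : G -> G -> G) (inv : G -> G) (e : G).
Hypothesis HG : is_group mul inv e.
Implicit Types (u v w : G -> R) (f : ZG G) (d h g x y : G).

Lemma g_rr g h : mul (mul g (inv h)) h = g.
Proof. rewrite <- (grp_assoc HG), (grp_inv_l HG), (grp_id_r HG); auto. Qed.
Lemma g_rr' g h : mul (mul g h) (inv h) = g.
Proof. rewrite <- (grp_assoc HG), (grp_inv_r HG), (grp_id_r HG); auto. Qed.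
Lemma g_ll d x : mul (inv d) (mul d x) = x.
Proof. rewrite (grp_assoc HG), (grp_inv_l HG), (grp_id_l HG); auto. Qed.
Lemma g_ll' d x : mul d (mul (inv d) x) = x.
Proof. rewrite (grp_assoc HG), (grp_inv_r HG), (grp_id_l HG); auto. Qed.
Lemma g_invinv x : inv (inv x) = x.
Proof. rewrite <- (grp_id_r HG (inv (inv x))), <- (grp_inv_l HG x), (grp_assoc HG), (grp_inv_l HG (inv x)), (grp_id_l HG). auto. Qed.

Definition tr (d : G) (v : G -> R) : G -> R := fun x => v (mul (inv d) x).
Definition ract (f : ZG G) (v : G -> R) : G -> R := l2_act mul inv v f.
Definition fstar (f : ZG G) : ZG G := map (fun p => (inv (fst p), snd p)) f.
Definition N (v : G -> R) := fsum (fun x => v x ^ 2).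
Definition ip (u v : G -> R) := fsum (fun x => u x * v x).

Lemma fs_tr d v : finsupp v -> finsupp (tr d v).
Proof. intros; unfold tr; apply fs_reindex with (t := mul d); auto.
  intros; apply g_ll'. Qed.

Lemma fsum_tr d v : finsupp v -> fsum (fun x => v (mul (inv d) x)) = fsum v.
Proof. intros; apply fsum_reindex with (t := mul d); auto; intros; [apply g_ll|apply g_ll']. Qed.

Lemma fs_sq v : finsupp v -> finsupp (fun x => v x ^ 2).
Proof. intros H; apply fs_ext with (fun x => v x * v x); [apply fs_mul_r; auto|intros; ring]. Qed.

Lemma N_tr d v : finsupp v -> N (tr d v) = N v.
Proof. intros; unfold N, tr. apply fsum_tr with (v := fun x => v x ^2). apply fs_sq; auto. Qed.

Lemma N_nonneg v : finsupp v -> 0 <= N v.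
Proof. intros; apply fsum_nonneg; [apply fs_sq; auto| intros; nra]. Qed.

Lemma fs_rsh h v : finsupp v -> finsupp (fun g => v (mul g (inv h))).
Proof. intros; apply fs_reindex with (t := fun x => mul x h); auto. intros; apply g_rr. Qed.

Lemma fsum_rsh h v : finsupp v -> fsum (fun g => v (mul g (inv h))) = fsum v.
Proof. intros; apply fsum_reindex with (t := fun x => mul x h); auto; intros; [apply g_rr'|apply g_rr]. Qed.

Lemma fs_ract f v : finsupp v -> finsupp (ract f v).
Proof. intros; unfold ract, l2_act. apply fs_sumlist with (F := fun p g => v (mul g (inv (fst p))) * IZR (snd p)).
  intros; apply fs_mul_r, fs_rsh; auto. Qed.

Lemma ract_plus f u v g : ract f (fun x => u x + v x) g = ract f u g + ract f v g.
Proof. unfold ract, l2_act. rewrite <- sumR_plus. apply sumR_ext; intros; ring. Qed.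
Lemma ract_scal f a u g : ract f (fun x => a * u x) g = a * ract f u g.
Proof. unfold ract, l2_act. rewrite <- sumR_scal. apply sumR_ext; intros; ring. Qed.
Lemma ract_tr f d u g : ract f (tr d u) g = tr d (ract f u) g.
Proof. unfold ract, l2_act, tr. apply sumR_ext; intros; rewrite (grp_assoc HG); auto. Qed.
Lemma ract_ext f u v g : (forall x, u x = v x) -> ract f u g = ract f v g.
Proof. intros H; unfold ract, l2_act; apply sumR_ext; intros; rewrite H; auto. Qed.

Lemma adjoint f u v : finsupp u -> finsupp v ->
  ip (ract f u) v = ip u (ract (fstar f) v).
Proof. intros Hu Hv. unfold ip, ract, l2_act, fstar.
  transitivity (fsum (fun g => sumR (map (fun p => u (mul g (inv (fst p))) * IZR (snd p) * v g) f))).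
  { apply fsum_ext; intros. rewrite Rmult_comm, <- sumR_scal. apply sumR_ext; intros; ring. }
  rewrite fsum_sumlist.
  2:{ intros; apply fs_mul_l, Hv. }
  transitivity (fsum (fun x => sumR (map (fun p => u x * (v (mul x (fst p)) * IZR (snd p))) f))).
  2:{ apply fsum_ext; intros. rewrite <- sumR_scal, map_map. apply sumR_ext; intros; simpl.
      rewrite g_invinv; auto. }
  rewrite fsum_sumlist. 2:{ intros; apply fs_mul_r; auto. }
  apply sumR_ext; intros p _.
  rewrite <- (fsum_rsh (fst p) (fun x => u x * (v (mul x (fst p)) * IZR (snd p)))).
  - apply fsum_ext; intros; rewrite g_rr; ring.
  - apply fs_mul_r; auto. Qed.

Definition Lf (f : ZG G) := INR (length f) * sumR (map (fun p => IZR (snd p) ^ 2) f).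

Lemma Lf_nonneg f : 0 <= Lf f.
Proof. unfold Lf. apply Rmult_le_pos. apply pos_INR. apply sumR_nonneg; intros; nra. Qed.

Lemma N_ract f v : finsupp v -> N (ract f v) <= Lf f * N v.
Proof. intros Hv. unfold N.
  apply Rle_trans with (fsum (fun g => INR (length f) *
     sumR (map (fun p => (v (mul g (inv (fst p))))^2 * IZR (snd p) ^2) f))).
  - apply fsum_le. apply fs_sq, fs_ract; auto.
    + apply fs_mul_l, fs_sumlist with (F := fun p g => v (mul g (inv (fst p))) ^ 2 * IZR (snd p) ^ 2).
      intros; apply fs_mul_r, fs_sq, fs_rsh; auto.
    + intros g. unfold ract, l2_act. eapply Rle_trans; [apply sq_sum_le|].
      right; f_equal; apply sumR_ext; intros; ring.
  - rewrite fsum_scal. 2:{ apply fs_sumlist with (F := fun p g => v (mul g (inv (fst p))) ^ 2 * IZR (snd p) ^ 2).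
      intros; apply fs_mul_r, fs_sq, fs_rsh; auto. }
    rewrite fsum_sumlist with (F := fun p g => v (mul g (inv (fst p))) ^ 2 * IZR (snd p) ^ 2).
    2:{ intros; apply fs_mul_r, fs_sq, fs_rsh; auto. }
    unfold Lf. rewrite Rmult_assoc. right; f_equal.
    rewrite Rmult_comm, <- sumR_scal. apply sumR_ext; intros p _.
    transitivity (IZR (snd p) ^2 * fsum (fun g => (fun x => v x ^2) (mul g (inv (fst p))))).
    { rewrite <- fsum_scal. apply fsum_ext; intros; simpl; ring. apply (fs_rsh (fst p) (fun x => v x ^ 2)), fs_sq; auto. }
    rewrite (fsum_rsh (fst p) (fun x => v x ^ 2)). ring. apply fs_sq; auto. Qed.

End Grp.

Lemma fsum_comb3 {G} (a b c : R) (P Q W : G -> R) : finsupp P -> finsupp Q -> finsupp W ->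
  fsum (fun x => a * P x + b * Q x + c * W x) = a * fsum P + b * fsum Q + c * fsum W.
Proof. intros HP HQ HW.
  assert (finsupp (fun x => a * P x)) by (apply fs_mul_l; auto).
  assert (finsupp (fun x => b * Q x)) by (apply fs_mul_l; auto).
  assert (finsupp (fun x => c * W x)) by (apply fs_mul_l; auto).
  rewrite (fsum_plus (fun x => a * P x + b * Q x) (fun x => c * W x)); auto using fs_plus.
  rewrite fsum_plus; auto. rewrite !fsum_scal; auto. Qed.

Lemma fsum_comb2 {G} (a b : R) (P Q : G -> R) : finsupp P -> finsupp Q ->
  fsum (fun x => a * P x + b * Q x) = a * fsum P + b * fsum Q.
Proof. intros. rewrite fsum_plus, !fsum_scal; auto; apply fs_mul_l; auto. Qed.

Section GD.
Context {G : Type}.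
Variables (mul : G -> G -> G) (inv : G -> G) (e : G).
Hypothesis HG : is_group mul inv e.
Implicit Types (u v w : G -> R) (d h : G).
Variable f : ZG G.
Variable eps : R.
Hypothesis Heps : 0 < eps.
Variable Bv : G -> R.
Hypothesis HB : finsupp Bv.

Definition Aop v := ract mul inv (fstar inv f) (ract mul inv f v).
Definition Res (y : G -> R) := fun x => Aop y x + eps * y x - Bv x.
Definition En (y : G -> R) := N (ract mul inv f y) + eps * N y - 2 * ip Bv y.

Lemma fs_Aop v : finsupp v -> finsupp (Aop v).
Proof. intros; unfold Aop; apply (fs_ract _ _ _ HG), (fs_ract _ _ _ HG); auto. Qed.

Lemma fs_Res y : finsupp y -> finsupp (Res y).
Proof. intros; unfold Res. apply fs_ext with (fun x => 1 * Aop y x + eps * y x + (-1) * Bv x).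
  apply fs_plus; [apply fs_plus|]; apply fs_mul_l; auto using fs_Aop. intros; ring. Qed.

Lemma En_lower y : finsupp y -> - (N Bv / eps) <= En y.
Proof. intros Hy. unfold En.
  assert (0 <= N (ract mul inv f y)) by (apply N_nonneg, (fs_ract _ _ _ HG); auto).
  assert (2 * ip Bv y <= eps * N y + N Bv / eps).
  { unfold ip, N. unfold Rdiv.
    replace (eps * fsum (fun x => y x ^ 2) + fsum (fun x => Bv x ^ 2) * / eps)
      with (eps * fsum (fun x => y x ^ 2) + / eps * fsum (fun x => Bv x ^ 2)) by ring.
    rewrite <- fsum_comb2 by (apply fs_sq; auto).
    rewrite <- fsum_scal by (apply fs_mul_l; auto).
    apply fsum_le.
    - apply fs_mul_l, fs_mul_l; auto.
    - apply fs_plus; apply fs_mul_l, fs_sq; auto.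
    - intros x. assert (0 < / eps) by (apply Rinv_0_lt_compat; auto).
      assert (0 <= (eps * y x - Bv x)^2 * / eps) by (apply Rmult_le_pos; [apply pow2_ge_0| lra]).
      replace ((eps * y x - Bv x)^2 * / eps) with (eps * y x ^2 - 2 * Bv x * y x + / eps * Bv x ^2) in H1
        by (field; apply Rgt_not_eq; lra). nra. }
  assert (0 <= eps * N y) by (apply Rmult_le_pos; [lra| apply N_nonneg; auto]). lra. Qed.

Definition tau := / (Lf f + eps).

Lemma tau_pos : 0 < tau.
Proof. unfold tau; apply Rinv_0_lt_compat; pose proof (Lf_nonneg f); lra. Qed.

Lemma ip_sym u v : ip u v = ip v u.
Proof. unfold ip; apply fsum_ext; intros; ring. Qed.

Lemma En_step y : finsupp y ->
  En (fun x => y x - tau * Res y x) <= En y - tau * N (Res y).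
Proof. intros Hy. set (g := Res y). assert (Hg : finsupp g) by (apply fs_Res; auto).
  set (ry := ract mul inv f y). set (rg := ract mul inv f g).
  assert (Hry : finsupp ry) by (apply (fs_ract _ _ _ HG); auto).
  assert (Hrg : finsupp rg) by (apply (fs_ract _ _ _ HG); auto).
  assert (E1 : N (ract mul inv f (fun x => y x - tau * g x)) = N ry - 2 * tau * ip ry rg + tau^2 * N rg).
  { unfold N, ip.
    transitivity (fsum (fun x => 1 * ry x ^2 + (-2*tau) * (ry x * rg x) + tau^2 * rg x^2)).
    - apply fsum_ext; intros x.
      rewrite (ract_ext mul inv f _ (fun x => y x + (- tau) * g x)) by (intros; ring).
      rewrite ract_plus, ract_scal. fold ry rg. ring.
    - rewrite fsum_comb3; try apply fs_sq; auto; try apply fs_mul_l; auto. ring. }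
  assert (E2 : N (fun x => y x - tau * g x) = N y - 2 * tau * ip y g + tau^2 * N g).
  { unfold N, ip.
    transitivity (fsum (fun x => 1 * y x ^2 + (-2*tau) * (y x * g x) + tau^2 * g x^2)).
    - apply fsum_ext; intros x. ring.
    - rewrite fsum_comb3; try apply fs_sq; auto; try apply fs_mul_l; auto. ring. }
  assert (E3 : ip Bv (fun x => y x - tau * g x) = ip Bv y - tau * ip Bv g).
  { unfold ip.
    transitivity (fsum (fun x => 1 * (Bv x * y x) + (- tau) * (Bv x * g x))).
    - apply fsum_ext; intros x. ring.
    - rewrite fsum_comb2; try apply fs_mul_l; auto. ring. }
  assert (E4 : ip ry rg = ip (Aop y) g).
  { rewrite ip_sym. unfold rg, ry. rewrite (adjoint _ _ _ HG); auto. apply ip_sym. }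
  assert (E5 : ip (Aop y) g + eps * ip y g - ip Bv g = N g).
  { unfold ip, N. replace (fsum (fun x => Aop y x * g x) + eps * fsum (fun x => y x * g x) - fsum (fun x => Bv x * g x))
      with (1 * fsum (fun x => Aop y x * g x) + eps * fsum (fun x => y x * g x) + (-1) * fsum (fun x => Bv x * g x)) by ring.
    rewrite <- fsum_comb3; try apply fs_mul_r; auto using fs_Aop.
    apply fsum_ext; intros x. unfold g, Res. ring. }
  assert (E6 : N rg <= Lf f * N g) by (apply (N_ract _ _ _ HG); auto).
  assert (0 <= N g) by (apply N_nonneg; auto).
  pose proof tau_pos.
  assert (Ht : tau * (Lf f + eps) = 1) by (unfold tau; field; pose proof (Lf_nonneg f); apply Rgt_not_eq; lra).
  unfold En. rewrite E1, E2, E3. unfold En. fold ry.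
  assert (tau^2 * N rg <= tau^2 * Lf f * N g) by (rewrite Rmult_assoc; apply Rmult_le_compat_l; nra).
  assert (tau^2 * Lf f * N g + eps * tau^2 * N g = tau * N g).
  { transitivity (tau * (tau * (Lf f + eps)) * N g). ring. rewrite Ht; ring. }
  rewrite E4. assert (Ea : ip (Aop y) g = N g - eps * ip y g + ip Bv g) by lra. rewrite Ea.
  lra. Qed.

Fixpoint yseq (k : nat) : G -> R :=
  match k with O => fun _ => 0 | S k => fun x => yseq k x - tau * Res (yseq k) x end.

Lemma fs_yseq k : finsupp (yseq k).
Proof. induction k; simpl. apply fs_zero.
  apply fs_ext with (fun x => 1 * yseq k x + (- tau) * Res (yseq k) x).
  apply fs_plus; apply fs_mul_l; auto using fs_Res. intros; ring. Qed.

Lemma En_zero : En (fun _ => 0) = 0.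
Proof. unfold En, N, ip.
  rewrite (fsum_ext _ (fun _ => 0)). rewrite (fsum_ext (fun x => Bv x * 0) (fun _ => 0)).
  rewrite (fsum_ext (fun x => 0 ^ 2) (fun _ => 0)). rewrite fsum_zero. ring.
  intros; ring. intros; ring.
  intros. unfold ract, l2_act. rewrite sumR_zero. ring. intros; ring. Qed.

Lemma En_yseq k theta : (forall j, (j < k)%nat -> theta < N (Res (yseq j))) ->
  En (yseq k) <= - tau * INR k * theta.
Proof. induction k; intros H. simpl. rewrite En_zero. lra.
  simpl yseq. eapply Rle_trans. apply En_step, fs_yseq.
  rewrite S_INR. assert (theta < N (Res (yseq k))) by (apply H; lia).
  assert (En (yseq k) <= - tau * INR k * theta) by (apply IHk; intros; apply H; lia).
  pose proof tau_pos. nra. Qed.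

Lemma gd_exists theta : 0 < theta -> exists y, finsupp y /\ N (Res y) <= theta.
Proof. intros Ht. apply NNPP; intro Hn.
  assert (Hall : forall j, theta < N (Res (yseq j))).
  { intros j. apply Rnot_le_lt. intro Hle. apply Hn. exists (yseq j); split; auto using fs_yseq. }
  destruct (archimed (N Bv / eps / (tau * theta))) as [Hk _].
  set (k := Z.to_nat (up (N Bv / eps / (tau * theta)))).
  assert (Hk2 : N Bv / eps / (tau * theta) < INR k).
  { unfold k. rewrite INR_IZR_INZ, Z2Nat.id. auto.
    assert (0 <= N Bv / eps / (tau * theta)).
    { pose proof tau_pos. unfold Rdiv. apply Rmult_le_pos. apply Rmult_le_pos. apply N_nonneg; auto.
      left; apply Rinv_0_lt_compat; auto. left; apply Rinv_0_lt_compat; nra. }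
    apply le_IZR. lra. }
  pose proof (En_yseq k theta (fun j _ => Hall j)).
  pose proof (En_lower (yseq k) (fs_yseq k)).
  pose proof tau_pos.
  assert (N Bv / eps < tau * theta * INR k).
  { apply Rmult_lt_reg_r with (/ (tau * theta)). apply Rinv_0_lt_compat; nra.
    replace (tau * theta * INR k * / (tau * theta)) with (INR k) by (field; split; apply Rgt_not_eq; lra). auto. }
  nra. Qed.

End GD.

Lemma sumR_ge_term {A} (F : A -> R) l a : In a l -> (forall x, In x l -> 0 <= F x) -> F a <= sumR (map F l).
Proof. induction l; simpl; intros H Hn. contradiction.
  destruct H as [->|H].
  - assert (0 <= sumR (map F l)) by (apply sumR_nonneg; auto). lra.
  - assert (0 <= F a0) by auto. assert (F a <= sumR (map F l)) by auto. lra. Qed.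

Lemma sumR_const {A} (c : R) (l : list A) : sumR (map (fun _ => c) l) = INR (length l) * c.
Proof. induction l; simpl. ring. rewrite IHl. destruct (length l); simpl; ring. Qed.

Lemma count_sum {A} (P : A -> Prop) l :
  INR (count_in P l) = sumR (map (fun x => if pb (P x) then 1 else 0) l).
Proof. unfold count_in. induction l as [|a l IH]; [simpl; auto|].
  cbn [filter]. rewrite map_cons. change (sumR (?x :: ?y)) with (x + sumR y). rewrite <- IH.
  destruct (pb (P a)). change (length (a :: ?t)) with (S (length t)). rewrite S_INR; lra. lra. Qed.

Lemma filter_len {A} (p : A -> bool) l : (length (filter p l) + length (filter (fun x => negb (p x)) l) = length l)%nat.
Proof. induction l; simpl; auto. destruct (p a); simpl; lia. Qed.

Lemma fs_dom {G} (p q r : G -> R) : finsupp p -> finsupp q -> (forall x, p x = 0 -> q x = 0 -> r x = 0) -> finsupp r.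
Proof. intros [l1 C1] [l2 C2] H. exists (l1 ++ l2). intros g Hg.
  destruct (Req_EM_T (p g) 0); [destruct (Req_EM_T (q g) 0)|].
  - exfalso; apply Hg; auto. - apply in_or_app; right; auto. - apply in_or_app; left; auto. Qed.

Section Iso.
Context {G : Type}.
Variables (mul : G -> G -> G) (inv : G -> G) (e : G).
Hypothesis HG : is_group mul inv e.
Implicit Types (u v w : G -> R) (d h : G).

Definition ind (A : list G) : G -> R := fun x => if in_dec eqd x A then 1 else 0.

Lemma fs_ind A : finsupp (ind A).
Proof. exists A; intros g H; unfold ind in H; destruct in_dec; auto; lra. Qed.

Lemma ind01 A x : ind A x = 0 \/ ind A x = 1.
Proof. unfold ind; destruct in_dec; auto. Qed.

Lemma fs_lsh s w : finsupp w -> finsupp (fun x => w (mul s x)).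
Proof. intros; apply fs_reindex with (t := mul (inv s)); auto. intros; apply (g_ll _ _ _ HG). Qed.

Lemma fsum_lsh s w : finsupp w -> fsum (fun x => w (mul s x)) = fsum w.
Proof. intros; apply fsum_reindex with (t := mul (inv s)); auto; intros; [apply (g_ll' _ _ _ HG)|apply (g_ll _ _ _ HG)]. Qed.

Lemma fsum_rmul a w : finsupp w -> fsum (fun x => w (mul x a)) = fsum w.
Proof. intros; apply fsum_reindex with (t := fun y => mul y (inv a)); auto; intros; [apply (g_rr _ _ _ HG)|apply (g_rr' _ _ _ HG)]. Qed.

Lemma fs_absd s w : finsupp w -> finsupp (fun x => Rabs (w (mul s x) - w x)).
Proof. intros H. apply fs_dom with (fun x => w (mul s x)) w; auto using fs_lsh.
  intros x -> ->. rewrite Rminus_0_r, Rabs_R0; auto. Qed.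

Definition bdf s A := fsum (fun x => Rabs (ind A (mul s x) - ind A x)).

Lemma bdf_nonneg s A : 0 <= bdf s A.
Proof. apply fsum_nonneg. apply fs_absd, fs_ind. intros; apply Rabs_pos. Qed.

Lemma sum_ind A (h : G -> R) : NoDup A -> fsum (fun x => ind A x * h x) = sumR (map h A).
Proof. intros N. rewrite (fsum_eq _ A); auto.
  - apply sumR_ext; intros x Hx. unfold ind; destruct in_dec; [ring|contradiction].
  - intros g Hg. unfold ind in Hg; destruct in_dec; auto. exfalso; apply Hg; ring. Qed.

Lemma bd_count s A : NoDup A ->
  INR (count_in (fun x => ~ In (mul s x) A) A + count_in (fun x => ~ In (mul (inv s) x) A) A) = bdf s A.
Proof. intros NA. unfold bdf. rewrite plus_INR, !count_sum.
  rewrite (fsum_ext _ (fun x => ind A x * (1 - ind A (mul s x)) + ind A (mul s x) * (1 - ind A x))).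
  2:{ intros x. destruct (ind01 A x) as [->| ->]; destruct (ind01 A (mul s x)) as [->| ->];
      unfold Rabs; destruct Rcase_abs; lra. }
  assert (F1 : finsupp (fun x => ind A (mul s x) * (1 - ind A x))) by (apply fs_mul_r, fs_lsh, fs_ind).
  rewrite fsum_plus; [| apply fs_mul_r, fs_ind | auto].
  rewrite <- (fsum_lsh (inv s) _ F1).
  rewrite (fsum_ext (fun x => ind A (mul s (mul (inv s) x)) * (1 - ind A (mul (inv s) x)))
     (fun x => ind A x * (1 - ind A (mul (inv s) x)))).
  2:{ intros; rewrite (g_ll' _ _ _ HG); auto. }
  rewrite !sum_ind; auto. f_equal; apply sumR_ext; intros x _; unfold pb, ind;
  destruct excluded_middle_informative, in_dec; try ring; contradiction. Qed.

Lemma ind_filter (p : G -> bool) A x : ind (filter p A) x = if p x then ind A x else 0.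
Proof. unfold ind. destruct (in_dec eqd x (filter p A)) as [H|H]; rewrite filter_In in H.
  - destruct H as [H1 H2]; rewrite H2; destruct in_dec; auto; contradiction.
  - destruct (p x) eqn:E; auto. destruct in_dec; auto. exfalso; auto. Qed.

Lemma ind_map_r a A y : ind (map (fun x => mul x (inv a)) A) y = ind A (mul y a).
Proof. unfold ind. destruct in_dec as [H|H]; destruct in_dec as [H'|H']; auto; exfalso.
  - apply in_map_iff in H. destruct H as [x [E Hx]]. subst y. rewrite (g_rr _ _ _ HG) in H'. auto.
  - apply H. apply in_map_iff. exists (mul y a); split; auto. apply (g_rr' _ _ _ HG). Qed.

Variable D : G -> Prop.
Hypothesis HD : is_subgroup mul inv e D.
Variable S : list G.
Hypothesis HS : forall s, In s S -> D s.
Variable eps0 : R.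
Hypothesis Heps0 : 0 < eps0.
Hypothesis Hiso : forall F, NoDup F -> F <> [] -> (forall x, In x F -> D x) ->
  exists s, In s S /\ eps0 * INR (length F) <= INR (count_in (fun x => ~ In (mul s x) F) F
            + count_in (fun x => ~ In (mul (inv s) x) F) F).

Lemma D_mul x y : D x -> D y -> D (mul x y).
Proof. destruct HD as [_ [H _]]; auto. Qed.
Lemma D_inv x : D x -> D (inv x).
Proof. destruct HD as [_ [_ H]]; auto. Qed.
Lemma D_e : D e.
Proof. destruct HD as [H _]; auto. Qed.

Lemma iso_sets : forall A, NoDup A -> eps0 * INR (length A) <= sumR (map (fun s => bdf s A) S).
Proof. intros A. remember (length A) as n eqn:En. revert A En.
  induction n as [n IH] using (well_founded_induction lt_wf). intros A En NA.
  destruct A as [|a A'].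
  - simpl in En; subst n; simpl. rewrite Rmult_0_r. apply sumR_nonneg; intros; apply bdf_nonneg.
  - set (p := fun x => pb (D (mul x (inv a)))).
    set (P := filter p (a :: A')). set (Rr := filter (fun x => negb (p x)) (a :: A')).
    assert (Ha : p a = true). { unfold p, pb. destruct excluded_middle_informative; auto.
      exfalso; apply n0. rewrite (grp_inv_r HG). apply D_e. }
    assert (Hlen : (length P + length Rr = length (a :: A'))%nat) by apply filter_len.
    assert (HPpos : (0 < length P)%nat). { unfold P; simpl; rewrite Ha; simpl; lia. }
    assert (NR : NoDup Rr) by (apply NoDup_filter; auto).
    assert (NP : NoDup P) by (apply NoDup_filter; auto).
    assert (IHR := IH (length Rr) ltac:(lia) Rr eq_refl NR).
    set (F := map (fun x => mul x (inv a)) P).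
    assert (NF : NoDup F).
    { apply NoDup_map_inv with (f := fun y => mul y a). unfold F. rewrite map_map.
      erewrite map_ext by (intros; apply (g_rr _ _ _ HG)). rewrite map_id; auto. }
    assert (FnE : F <> []). { unfold F; intro E. apply (f_equal (@length G)) in E. rewrite length_map in E. simpl in E. lia. }
    assert (FD : forall x, In x F -> D x).
    { intros x Hx. unfold F in Hx. apply in_map_iff in Hx. destruct Hx as [y [<- Hy]].
      unfold P in Hy. apply filter_In in Hy. destruct Hy as [_ Hy]. unfold p, pb in Hy.
      destruct excluded_middle_informative; auto; discriminate. }
    destruct (Hiso F NF FnE FD) as [s0 [Hs0 Hb]].
    rewrite bd_count in Hb; auto.
    assert (EF : bdf s0 F = bdf s0 P).
    { unfold bdf. rewrite <- (fsum_rmul a (fun x => Rabs (ind P (mul s0 x) - ind P x))) by (apply fs_absd, fs_ind).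
      apply fsum_ext; intros y. unfold F. rewrite !ind_map_r, (grp_assoc HG); auto. }
    assert (Esplit : forall s, In s S -> bdf s (a :: A') = bdf s P + bdf s Rr).
    { intros s Hs. unfold bdf. rewrite <- fsum_plus by (apply fs_absd, fs_ind).
      apply fsum_ext; intros x. unfold P, Rr. rewrite !ind_filter.
      assert (Hp : p (mul s x) = p x).
      { unfold p, pb. rewrite <- (grp_assoc HG). destruct excluded_middle_informative as [H1|H1];
        destruct excluded_middle_informative as [H2|H2]; auto; exfalso.
        - apply H2. replace (mul x (inv a)) with (mul (inv s) (mul s (mul x (inv a)))) by apply (g_ll _ _ _ HG).
          apply D_mul; auto. apply D_inv; auto.
        - apply H1. apply D_mul; auto. }
      rewrite Hp. destruct (p x); simpl; rewrite Rminus_diag, Rabs_R0; ring. }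
    rewrite (sumR_ext _ (fun s => bdf s P + bdf s Rr)) by auto.
    rewrite sumR_plus.
    assert (bdf s0 P <= sumR (map (fun s => bdf s P) S)) by (apply (sumR_ge_term (fun s => bdf s P)); auto; intros; apply bdf_nonneg).
    rewrite En, <- Hlen, plus_INR. fold F in Hb. unfold F in Hb. rewrite length_map in Hb.
    fold F in Hb. lra. Qed.


Lemma min_exists (phi : G -> R) (A : list G) : A <> [] -> exists a0, In a0 A /\ forall x, In x A -> phi a0 <= phi x.
Proof. induction A as [|a A IH]; intros H. contradiction.
  destruct A as [|b A'].
  - exists a; split; simpl; auto. intros x [->|[]]; lra.
  - destruct IH as [a1 [H1 H2]]. discriminate.
    destruct (Rle_dec (phi a) (phi a1)).
    + exists a; split; simpl; auto. intros x [->|Hx]; [lra|]. specialize (H2 x Hx); lra.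
    + exists a1; split; [right; auto|]. intros x [->|Hx]; [lra|auto]. Qed.

Lemma nodup_remove (a : G) A : NoDup A -> NoDup (remove eqd a A).
Proof. induction 1; simpl. constructor. destruct eqd; auto. constructor; auto.
  intro Hx; apply H. apply in_remove in Hx; tauto. Qed.

Lemma fsum_ind A : NoDup A -> fsum (ind A) = INR (length A).
Proof. intros NA. rewrite (fsum_ext _ (fun x => ind A x * 1)) by (intros; ring).
  rewrite sum_ind; auto. clear NA. induction A; simpl; auto.
  rewrite IHA. destruct (length A); simpl; lra. Qed.

Lemma l1_ineq_aux : forall n A (phi : G -> R), length A = n -> NoDup A -> covers A phi -> (forall x, 0 <= phi x) ->
  eps0 * fsum phi <= sumR (map (fun s => fsum (fun x => Rabs (phi (mul s x) - phi x))) S).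
Proof. intros n. induction n as [n IH] using (well_founded_induction lt_wf).
  intros A phi En NA CA Hpos.
  assert (Hfs : finsupp phi) by (exists A; auto).
  assert (Hout : forall x, ~ In x A -> phi x = 0).
  { intros x Hx. apply NNPP; intro H; apply Hx; auto. }
  destruct A as [|a A'].
  - rewrite (fsum_eq phi []); simpl; [|constructor|auto]. rewrite Rmult_0_r.
    apply sumR_nonneg; intros; apply fsum_nonneg; [apply fs_absd; auto| intros; apply Rabs_pos].
  - destruct (min_exists phi (a :: A') ltac:(discriminate)) as [a0 [Ha0 Hmin]].
    set (A := a :: A') in *. set (m := phi a0).
    set (psi := fun x => phi x - m * ind A x).
    assert (Hm : 0 <= m) by apply Hpos.
    assert (Hpsi : forall x, 0 <= psi x).
    { intros x. unfold psi, ind. destruct in_dec. specialize (Hmin x i); unfold m; lra. rewrite Hout; auto; lra. }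
    set (A2 := remove eqd a0 A).
    assert (NA2 : NoDup A2) by (apply nodup_remove; auto).
    assert (CA2 : covers A2 psi).
    { intros x Hx. unfold A2. apply in_in_remove.
      - intro E; subst x. apply Hx. unfold psi, ind. destruct in_dec; [|contradiction]. unfold m; ring.
      - apply NNPP; intro Hn. apply Hx. unfold psi, ind. destruct in_dec; [contradiction|]. rewrite Hout; auto; ring. }
    assert (LA2 : (length A2 < length A)%nat) by (apply remove_length_lt; auto).
    assert (IH2 := IH (length A2) ltac:(lia) A2 psi eq_refl NA2 CA2 Hpsi).
    assert (Hfpsi : finsupp psi) by (exists A2; auto).
    assert (Ef : fsum phi = m * INR (length A) + fsum psi).
    { rewrite <- fsum_ind; auto. rewrite <- fsum_scal by apply fs_ind. rewrite <- fsum_plus; auto.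
      apply fsum_ext; intros; unfold psi; ring. apply fs_mul_l, fs_ind. }
    assert (Ept : forall s, fsum (fun x => Rabs (phi (mul s x) - phi x)) =
      m * bdf s A + fsum (fun x => Rabs (psi (mul s x) - psi x))).
    { intros s. unfold bdf. rewrite <- fsum_scal by (apply fs_absd, fs_ind). rewrite <- fsum_plus;
      [| apply fs_mul_l, fs_absd, fs_ind | apply fs_absd; auto].
      apply fsum_ext; intros x. unfold psi.
      assert (P1 := Hpsi x). assert (P2 := Hpsi (mul s x)). unfold psi in P1, P2.
      unfold ind in *. destruct (in_dec eqd x A) as [I1|I1]; destruct (in_dec eqd (mul s x) A) as [I2|I2].
      - unfold Rabs; repeat destruct Rcase_abs; lra.
      - rewrite (Hout (mul s x)) in * by auto. unfold Rabs; repeat destruct Rcase_abs; lra.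
      - rewrite (Hout x) in * by auto. unfold Rabs; repeat destruct Rcase_abs; lra.
      - rewrite (Hout x), (Hout (mul s x)) by auto. unfold Rabs; repeat destruct Rcase_abs; lra. }
    rewrite (sumR_ext _ (fun s => m * bdf s A + fsum (fun x => Rabs (psi (mul s x) - psi x)))) by (intros; apply Ept).
    rewrite sumR_plus, sumR_scal. rewrite Ef.
    assert (eps0 * INR (length A) <= sumR (map (fun s => bdf s A) S)) by (apply iso_sets; auto).
    assert (m * (eps0 * INR (length A)) <= m * sumR (map (fun s => bdf s A) S)) by (apply Rmult_le_compat_l; auto).
    lra. Qed.

Lemma l1_ineq (phi : G -> R) : finsupp phi -> (forall x, 0 <= phi x) ->
  eps0 * fsum phi <= sumR (map (fun s => fsum (fun x => Rabs (phi (mul s x) - phi x))) S).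
Proof. intros H Hp. destruct (fs_cover _ H) as [A [NA CA]]. eapply l1_ineq_aux; eauto. Qed.

Lemma two_ab (lam x y : R) : 0 < lam -> 2 * Rabs (x * y) <= lam * x^2 + y^2 / lam.
Proof. intros Hl. rewrite Rabs_mult.
  assert (0 <= (lam * Rabs x - Rabs y)^2 / lam) by (unfold Rdiv; apply Rmult_le_pos; [apply pow2_ge_0|left; apply Rinv_0_lt_compat; auto]).
  replace ((lam * Rabs x - Rabs y)^2 / lam) with (lam * Rabs x ^2 - 2 * Rabs x * Rabs y + Rabs y ^2 / lam) in H
    by (field; apply Rgt_not_eq; lra).
  rewrite <- !Rsqr_pow2, <- !Rsqr_abs in *. rewrite !Rsqr_pow2 in *. lra. Qed.

Definition Kgap := (4 * (INR (length S) + 1) / eps0) / eps0.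

Lemma spectral (v : G -> R) : finsupp v ->
  N v <= Kgap * sumR (map (fun s => N (fun x => v x - v (mul (inv s) x))) S).
Proof. intros Hv. set (k := INR (length S)). set (lam := 4 * (k + 1) / eps0).
  assert (Hk : 0 <= k) by apply pos_INR.
  assert (Hlam : 0 < lam) by (unfold lam; unfold Rdiv; apply Rmult_lt_0_compat; [lra|apply Rinv_0_lt_compat; auto]).
  assert (Hsq : finsupp (fun x => v x ^ 2)) by (apply fs_sq; auto).
  pose proof (l1_ineq (fun x => v x ^ 2) Hsq ltac:(intros; apply pow2_ge_0)) as H1. fold (N v) in H1.
  assert (Hterm : forall s, fsum (fun x => Rabs (v (mul s x) ^ 2 - v x ^ 2)) <=
     lam / 2 * N (fun x => v x - v (mul (inv s) x)) + 2 / lam * N v).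
  { intros s.
    assert (Q : N (fun x => v x - v (mul (inv s) x)) = fsum (fun x => (v (mul s x) - v x)^2)).
    { unfold N. rewrite <- (fsum_lsh s (fun x => (v x - v (mul (inv s) x))^2)).
      apply fsum_ext; intros; rewrite (g_ll _ _ _ HG); auto.
      apply fs_sq, fs_plus; [auto|]. apply fs_ext with (fun x => (-1) * v (mul (inv s) x)); [|intros; ring].
      apply fs_mul_l, fs_lsh; auto. }
    assert (Hlv : fsum (fun x => v (mul s x) ^ 2) = N v) by (apply (fsum_lsh s (fun x => v x ^2)); auto).
    assert (Fa : finsupp (fun x => (v (mul s x) - v x) ^ 2)).
    { apply fs_sq, fs_plus; [apply fs_lsh; auto|]. apply fs_ext with (fun x => (-1) * v x); [|intros; ring]. apply fs_mul_l; auto. }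
    assert (Fb : finsupp (fun x => v (mul s x) ^ 2)) by (apply (fs_lsh s (fun x => v x ^ 2)); auto).
    rewrite Q.
    replace (lam / 2 * fsum (fun x => (v (mul s x) - v x) ^ 2) + 2 / lam * N v)
      with (lam * / 2 * fsum (fun x => (v (mul s x) - v x) ^ 2) + / lam * fsum (fun x => v (mul s x) ^ 2) + / lam * fsum (fun x => v x ^ 2))
      by (rewrite Hlv; unfold N; field; apply Rgt_not_eq; lra).
    rewrite <- (fsum_comb3 (lam * / 2) (/ lam) (/ lam)); auto.
    apply fsum_le.
    - apply (fs_absd s (fun x => v x ^ 2)); auto.
    - apply fs_plus; [apply fs_plus|]; apply fs_mul_l; auto.
    - intros x. set (a := v (mul s x)). set (b := v x).
      replace (a^2 - b^2) with ((a - b) * (a + b)) by ring.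
      pose proof (two_ab lam (a - b) (a + b) Hlam).
      assert ((a + b)^2 / lam <= 2 * (/ lam * a^2 + / lam * b^2)).
      { unfold Rdiv. assert (0 < / lam) by (apply Rinv_0_lt_compat; auto).
        assert (0 <= (a-b)^2) by apply pow2_ge_0.
        assert ((a+b)^2 <= 2 * (a^2 + b^2)) by lra.
        replace (2 * (/ lam * a ^ 2 + / lam * b ^ 2)) with (2 * (a^2 + b^2) * / lam) by ring.
        apply Rmult_le_compat_r; lra. }
      unfold Rdiv in *. lra. }
  set (Q := sumR (map (fun s => N (fun x => v x - v (mul (inv s) x))) S)).
  assert (H2 : eps0 * N v <= lam / 2 * Q + k * (2 / lam) * N v).
  { eapply Rle_trans; [apply H1|]. unfold Q. rewrite <- sumR_scal.
    replace (k * (2 / lam) * N v) with (sumR (map (fun _ => 2 / lam * N v) S)).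
    rewrite <- sumR_plus. apply sumR_le; intros; apply Hterm.
    rewrite sumR_const. unfold k; ring. }
  assert (Hkl : k * (2 / lam) <= eps0 / 2).
  { unfold lam. replace (k * (2 / (4 * (k + 1) / eps0))) with (eps0 / 2 * (k / (k + 1))) by (field; split; apply Rgt_not_eq; lra).
    assert (k / (k+1) <= 1). { apply Rmult_le_reg_r with (k+1). lra. unfold Rdiv. rewrite Rmult_assoc, Rinv_l. lra. apply Rgt_not_eq; lra. }
    nra. }
  assert (0 <= N v) by (apply N_nonneg; auto).
  assert (eps0 / 2 * N v <= lam / 2 * Q) by nra.
  unfold Kgap. fold k. fold lam. fold Q.
  apply Rmult_le_reg_l with (eps0 / 2). lra.
  replace (eps0 / 2 * (lam / eps0 * Q)) with (lam / 2 * Q) by (field; apply Rgt_not_eq; lra). lra. Qed.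

End Iso.

Section GR.
Context {G : Type}.
Variables (mul : G -> G -> G) (inv : G -> G) (e : G).
Hypothesis HG : is_group mul inv e.

Definition cR (x : ZG G) (g : G) : R := IZR (coeff x g).

Lemma cR_eq x g : cR x g = sumR (map (fun p => if pb (fst p = g) then IZR (snd p) else 0) x).
Proof. unfold cR, coeff. induction x; simpl; auto. rewrite plus_IZR, IHx. destruct pb; auto. Qed.

Lemma cR_app x y g : cR (x ++ y) g = cR x g + cR y g.
Proof. rewrite !cR_eq, map_app, sumR_app; auto. Qed.

Lemma cR_opp x g : cR (zg_opp x) g = - cR x g.
Proof. unfold cR, zg_opp, coeff. induction x as [|a x IH]; simpl. ring. rewrite !plus_IZR, IH. destruct pb; rewrite ?opp_IZR; ring. Qed.

Lemma cR_sub x y g : cR (zg_sub x y) g = cR x g - cR y g.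
Proof. unfold zg_sub, zg_add. rewrite cR_app, cR_opp. ring. Qed.

Lemma cR_lact d x g : cR (zg_lact mul d x) g = cR x (mul (inv d) g).
Proof. rewrite !cR_eq. unfold zg_lact. rewrite map_map. apply sumR_ext; intros p _; simpl.
  unfold pb. destruct excluded_middle_informative as [H1|H1]; destruct excluded_middle_informative as [H2|H2]; auto;
  exfalso.
  - apply H2. rewrite <- H1. rewrite (g_ll _ _ _ HG); auto.
  - apply H1. rewrite H2. apply (g_ll' _ _ _ HG). Qed.

Lemma cR_mul x f g : cR (zg_mul mul x f) g = ract mul inv f (cR x) g.
Proof. unfold zg_mul, ract, l2_act.
  transitivity (sumR (map (fun p => sumR (map (fun q => if pb (mul (fst p) (fst q) = g) then IZR (snd p * snd q) else 0) f)) x)).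
  { induction x as [|p x IH]; simpl. rewrite cR_eq; auto.
    rewrite cR_app, IH. f_equal. rewrite cR_eq, map_map. auto. }
  rewrite sumR_exchange. apply sumR_ext; intros q _.
  rewrite cR_eq, Rmult_comm, <- sumR_scal. apply sumR_ext; intros p _.
  rewrite mult_IZR. unfold pb. destruct excluded_middle_informative as [H1|H1]; destruct excluded_middle_informative as [H2|H2]; try ring;
  exfalso.
  - apply H2. rewrite <- H1. rewrite (g_rr' _ _ _ HG); auto.
  - apply H1. rewrite H2. apply (g_rr _ _ _ HG). Qed.

Lemma coeff_in (x : ZG G) (g : G) : coeff x g <> 0%Z -> In g (map fst x).
Proof. unfold coeff. induction x as [|p x IH]; simpl; intros H. lia.
  unfold pb in H. destruct excluded_middle_informative. left; auto. right; apply IH. fold (pb (fst p = g)) in H. unfold pb. lia. Qed.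

Lemma fs_cR (x : ZG G) : finsupp (cR x).
Proof. exists (map fst x). intros g H. apply coeff_in. intro E. apply H. unfold cR. rewrite E. auto. Qed.

End GR.

Lemma cv_plus u v a b : Un_cv u a -> Un_cv v b -> Un_cv (fun n => u n + v n) (a + b).
Proof. intros. apply CV_plus; auto. Qed.

Lemma cv_const c : Un_cv (fun _ => c) c.
Proof. intros eps H. exists O. intros. unfold R_dist. rewrite Rminus_diag, Rabs_R0; auto. Qed.

Lemma cv_mult u v a b : Un_cv u a -> Un_cv v b -> Un_cv (fun n => u n * v n) (a * b).
Proof. intros. apply CV_mult; auto. Qed.

Lemma cv_ext u v a : (forall n, u n = v n) -> Un_cv u a -> Un_cv v a.
Proof. intros E H eps He. destruct (H eps He) as [N HN]. exists N; intros. rewrite <- E; auto. Qed.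

Lemma cv_sumR {A} (F : nat -> A -> R) (L : A -> R) l :
  (forall p, In p l -> Un_cv (fun n => F n p) (L p)) ->
  Un_cv (fun n => sumR (map (F n) l)) (sumR (map L l)).
Proof. induction l; simpl; intros H. apply cv_const.
  apply cv_plus; auto. Qed.

Lemma cv_le_ev u l M : Un_cv u l -> (exists N, forall n, (n >= N)%nat -> u n <= M) -> l <= M.
Proof. intros H [N HN]. apply Rnot_lt_le; intro Hl.
  destruct (H (l - M)) as [N2 H2]. lra.
  specialize (H2 (max N N2) ltac:(lia)). specialize (HN (max N N2) ltac:(lia)).
  unfold R_dist in H2. apply Rabs_def2 in H2. lra. Qed.

Lemma cv_le u l M : Un_cv u l -> (forall n, u n <= M) -> l <= M.
Proof. intros H H2. apply (cv_le_ev u); auto. exists O; auto. Qed.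

Lemma cv_sub u (phi : nat -> nat) l : (forall n, (n <= phi n)%nat) -> Un_cv u l -> Un_cv (fun n => u (phi n)) l.
Proof. intros Hp H eps He. destruct (H eps He) as [N HN]. exists N. intros n Hn. apply HN. specialize (Hp n). lia. Qed.

Lemma cv_unique u a b : Un_cv u a -> Un_cv u b -> a = b.
Proof. intros. eapply UL_sequence; eauto. Qed.

Definition SI (phi : nat -> nat) := forall n, (phi n < phi (S n))%nat.

Lemma SI_ge phi : SI phi -> forall n, (n <= phi n)%nat.
Proof. intros H n; induction n. lia. specialize (H n); lia. Qed.

Lemma SI_mono phi : SI phi -> forall n m, (n < m)%nat -> (phi n < phi m)%nat.
Proof. intros H n m Hnm. induction m. lia. destruct (Nat.eq_dec n m). subst; apply H.
  specialize (H m). assert (n < m)%nat by lia. specialize (IHm H0). lia. Qed.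

Lemma SI_comp phi psi : SI phi -> SI psi -> SI (fun n => phi (psi n)).
Proof. intros H1 H2 n. apply SI_mono; auto. Qed.

Lemma BW_sub (u : nat -> R) M : (forall n, Rabs (u n) <= M) ->
  exists phi, SI phi /\ exists l, Un_cv (fun n => u (phi n)) l.
Proof. intros Hb.
  destruct (Bolzano_Weierstrass u (fun c => -M <= c <= M)) as [l Hl].
  apply compact_P3. intros n; specialize (Hb n); unfold Rabs in Hb; destruct Rcase_abs in Hb; lra.
  assert (Hnext : forall N k, exists p, (N <= p)%nat /\ Rabs (u p - l) < / INR (S k)).
  { intros N k. assert (Hpos : 0 < / INR (S k)) by (apply Rinv_0_lt_compat, lt_0_INR; lia).
    destruct (Hl (disc l (mkposreal _ Hpos)) N) as [p [Hp1 Hp2]].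
    - exists (mkposreal _ Hpos). intros y Hy; auto.
    - exists p; split; auto. }
  set (nx := fun N k => proj1_sig (constructive_indefinite_description _ (Hnext N k))).
  assert (Hnx : forall N k, (N <= nx N k)%nat /\ Rabs (u (nx N k) - l) < / INR (S k)).
  { intros; unfold nx; destruct constructive_indefinite_description; auto. }
  set (phi := fix phi n := match n with O => nx O O | S n => nx (S (phi n)) (S n) end).
  exists phi. split.
  - intros n. simpl. destruct (Hnx (S (phi n)) (S n)). lia.
  - exists l. intros eps He.
    destruct (archimed (/ eps)) as [Ha _].
    set (K := Z.to_nat (up (/ eps))).
    assert (HK : / eps < INR K).
    { unfold K. rewrite INR_IZR_INZ, Z2Nat.id; auto. apply le_IZR.
      assert (0 < / eps) by (apply Rinv_0_lt_compat; auto). lra. }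
    exists K. intros n Hn. unfold R_dist.
    assert (Hd : Rabs (u (phi n) - l) < / INR (S n)).
    { destruct n; simpl; apply Hnx. }
    eapply Rlt_le_trans; [apply Hd|].
    assert (INR K <= INR n) by (apply le_INR; lia).
    rewrite S_INR. assert (0 < / eps) by (apply Rinv_0_lt_compat; auto).
    replace eps with (/ / eps) by (field; apply Rgt_not_eq; lra).
    apply Rinv_le_contravar; lra. Qed.

Definition ext (u : nat -> R) : nat -> nat :=
  match excluded_middle_informative (exists phi, SI phi /\ exists l, Un_cv (fun n => u (phi n)) l) with
  | left H => proj1_sig (constructive_indefinite_description _ H)
  | right _ => fun n => n end.

Lemma ext_spec u M : (forall n, Rabs (u n) <= M) -> SI (ext u) /\ exists l, Un_cv (fun n => u (ext u n)) l.
Proof. intros Hb. unfold ext. destruct excluded_middle_informative as [H|H].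
  - destruct constructive_indefinite_description; simpl; auto.
  - exfalso; apply H; eapply BW_sub; eauto. Qed.

Section Diag.
Context {G : Type}.
Variable enum : nat -> G.
Hypothesis Hsurj : forall g, exists k, enum k = g.
Variable y : nat -> G -> R.
Variable M : R.
Hypothesis Hb : forall n g, Rabs (y n g) <= M.

Fixpoint psi (k : nat) : nat -> nat :=
  match k with
  | O => ext (fun n => y n (enum O))
  | S k => fun n => psi k (ext (fun m => y (psi k m) (enum (S k))) n) end.

Lemma psi_spec k : SI (psi k) /\ exists l, Un_cv (fun n => y (psi k n) (enum k)) l.
Proof. induction k; simpl.
  - apply (ext_spec (fun n => y n (enum O)) M); auto.
  - destruct IHk as [H1 _]. destruct (ext_spec (fun m => y (psi k m) (enum (S k))) M) as [H2 H3]; auto.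
    split; auto. apply SI_comp; auto. Qed.

Lemma psi_diag k n : (k <= n)%nat -> forall j, exists m, (j <= m)%nat /\ psi n j = psi k m.
Proof. induction n; intros Hk j.
  - assert (k = O) by lia; subst. exists j; split; auto.
  - destruct (Nat.eq_dec k (S n)). subst. exists j; auto.
    simpl. set (s := ext (fun m => y (psi n m) (enum (S n)))).
    assert (Hs : SI s) by (apply (ext_spec _ M); auto).
    destruct (IHn ltac:(lia) (s j)) as [m [Hm1 Hm2]].
    exists m; split; auto. pose proof (SI_ge s Hs j); lia. Qed.

Lemma diag : exists phi, SI phi /\ exists w : G -> R, forall g, Un_cv (fun n => y (phi n) g) (w g).
Proof. exists (fun n => psi n n). split.
  - intros n. simpl. set (s := ext (fun m => y (psi n m) (enum (S n)))).
    assert (Hs : SI s) by (apply (ext_spec _ M); auto).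
    apply SI_mono. apply psi_spec. pose proof (SI_ge s Hs (S n)). lia.
  - assert (Hex : forall g, exists l, Un_cv (fun n => y (psi n n) g) l).
    { intros g. destruct (Hsurj g) as [k <-]. destruct (psi_spec k) as [_ [l Hl]].
      exists l. intros eps He. destruct (Hl eps He) as [N HN]. exists (max N k). intros n Hn.
      destruct (psi_diag k n ltac:(lia) n) as [m [Hm1 Hm2]]. rewrite Hm2. apply HN. lia. }
    exists (fun g => proj1_sig (constructive_indefinite_description _ (Hex g))).
    intros g. destruct constructive_indefinite_description; simpl; auto. Qed.

End Diag.

Section U.
Context {G : Type}.
Variables (mul : G -> G -> G) (inv : G -> G) (e : G).
Hypothesis HG : is_group mul inv e.
Variable f : ZG G.
Variable eps : R.
Hypothesis Heps : 0 < eps.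
Hypothesis Heps1 : eps <= 1.
Variable Bv : G -> R.
Hypothesis HB : finsupp Bv.

Lemma fs_sub (a b : G -> R) : finsupp a -> finsupp b -> finsupp (fun x => a x - b x).
Proof. intros. apply fs_ext with (fun x => 1 * a x + (-1) * b x); [|intros; ring].
  apply fs_plus; apply fs_mul_l; auto. Qed.

Lemma ract_lin3 (a b c : G -> R) g : ract mul inv f (fun x => a x - (b x - c x)) g =
  ract mul inv f a g - (ract mul inv f b g - ract mul inv f c g).
Proof. rewrite (ract_ext mul inv f _ (fun x => a x + (-1) * (b x + (-1) * c x))) by (intros; ring).
  rewrite ract_plus, ract_scal, ract_plus, ract_scal. ring. Qed.

Lemma ract_lin3' (F : ZG G) (a b c : G -> R) g : ract mul inv F (fun x => a x - (b x - c x)) g =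
  ract mul inv F a g - (ract mul inv F b g - ract mul inv F c g).
Proof. rewrite (ract_ext mul inv F _ (fun x => a x + (-1) * (b x + (-1) * c x))) by (intros; ring).
  rewrite ract_plus, ract_scal, ract_plus, ract_scal. ring. Qed.

Lemma N_sub_le (a b : G -> R) : finsupp a -> finsupp b -> N (fun x => a x - b x) <= 2 * N a + 2 * N b.
Proof. intros Ha Hb. unfold N. rewrite <- fsum_comb2 by (apply fs_sq; auto).
  apply fsum_le. apply fs_sq, fs_sub; auto. apply fs_plus; apply fs_mul_l, fs_sq; auto.
  intros x. assert (0 <= (a x + b x)^2) by apply pow2_ge_0. nra. Qed.

Lemma u_bound (d : G) (gam y : G -> R) : finsupp gam -> finsupp y ->
  (forall x, Aop mul inv f gam x = Bv x - tr mul inv d Bv x) ->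
  N (Res mul inv f eps Bv y) <= eps ^ 4 ->
  N (fun x => gam x - (y x - tr mul inv d y x)) <= 2 * N gam + 8 * eps ^ 2 /\
  N (ract mul inv f (fun x => gam x - (y x - tr mul inv d y x))) <= eps * (N gam + 4).
Proof. intros Hgam Hy Hid Hres.
  set (u := fun x => gam x - (y x - tr mul inv d y x)).
  set (g := Res mul inv f eps Bv y).
  set (dg := fun x => g x - tr mul inv d g x).
  assert (Hg : finsupp g) by (apply (fs_Res _ _ _ HG); auto).
  assert (Hu : finsupp u) by (apply fs_sub; auto; apply fs_sub; auto; apply (fs_tr _ _ _ HG); auto).
  assert (Hdg : finsupp dg) by (apply fs_sub; auto; apply (fs_tr _ _ _ HG); auto).
  assert (E1 : forall x, Aop mul inv f u x + eps * u x = eps * gam x - dg x).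
  { intros x. unfold Aop, u, dg, g, Res, tr.
    rewrite (ract_ext mul inv (fstar inv f) _
      (fun z => ract mul inv f gam z - (ract mul inv f y z - ract mul inv f (tr mul inv d y) z))) by (intros; apply ract_lin3).
    rewrite ract_lin3'. rewrite (ract_ext mul inv (fstar inv f) (ract mul inv f (tr mul inv d y)) (tr mul inv d (ract mul inv f y)))
      by (intros; apply (ract_tr _ _ _ HG)).
    rewrite (ract_tr _ _ _ HG). fold (Aop mul inv f gam). rewrite Hid. unfold tr, Aop. ring. }
  assert (E2 : N (ract mul inv f u) + eps * N u = eps * ip gam u - ip dg u).
  { assert (N (ract mul inv f u) = ip u (Aop mul inv f u)).
    { unfold N, Aop. rewrite <- (adjoint _ _ _ HG); auto. unfold ip. apply fsum_ext; intros; ring.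
      apply (fs_ract _ _ _ HG); auto. }
    rewrite H. unfold ip, N.
    replace (fsum (fun x => u x * Aop mul inv f u x) + eps * fsum (fun x => u x ^ 2))
      with (1 * fsum (fun x => u x * Aop mul inv f u x) + eps * fsum (fun x => u x ^ 2)) by ring.
    rewrite <- fsum_comb2; [|apply fs_mul_l; auto| apply fs_sq; auto].
    replace (eps * fsum (fun x => gam x * u x) - fsum (fun x => dg x * u x))
      with (eps * fsum (fun x => gam x * u x) + (-1) * fsum (fun x => dg x * u x)) by ring.
    rewrite <- fsum_comb2; try apply fs_mul_l; auto.
    apply fsum_ext; intros x. pose proof (E1 x). 
    replace (1 * (u x * Aop mul inv f u x) + eps * u x ^ 2) with (u x * (Aop mul inv f u x + eps * u x)) by ring.
    rewrite H0. ring. apply (fs_Aop _ _ _ HG); auto. }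
  assert (E3 : eps * ip gam u - ip dg u <= eps * N gam + eps / 2 * N u + N dg / eps).
  { unfold ip, N. unfold Rdiv.
    replace (eps * fsum (fun x => gam x * u x) - fsum (fun x => dg x * u x))
      with (eps * fsum (fun x => gam x * u x) + (-1) * fsum (fun x => dg x * u x)) by ring.
    rewrite <- fsum_comb2; try apply fs_mul_l; auto.
    replace (eps * fsum (fun x => gam x ^ 2) + eps * / 2 * fsum (fun x => u x ^ 2) + fsum (fun x => dg x ^ 2) * / eps)
      with (eps * fsum (fun x => gam x ^ 2) + eps * / 2 * fsum (fun x => u x ^ 2) + / eps * fsum (fun x => dg x ^ 2)) by ring.
    rewrite <- fsum_comb3; try apply fs_sq; auto.
    apply fsum_le.
    - apply fs_plus; apply fs_mul_l; apply fs_mul_l; auto.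
    - apply fs_plus; [apply fs_plus|]; apply fs_mul_l, fs_sq; auto.
    - intros x. assert (0 < / eps) by (apply Rinv_0_lt_compat; auto).
      assert (0 <= (gam x - u x / 2)^2) by apply pow2_ge_0.
      assert (0 <= (eps * u x / 2 + dg x)^2 * / eps) by (apply Rmult_le_pos; [apply pow2_ge_0|lra]).
      replace ((eps * u x / 2 + dg x)^2 * / eps) with (eps * u x ^2 / 4 + u x * dg x + / eps * dg x ^2) in H1
        by (field; apply Rgt_not_eq; lra).
      nra. }
  assert (E4 : N dg <= 4 * N g).
  { eapply Rle_trans. apply N_sub_le; auto. apply (fs_tr _ _ _ HG); auto.
    rewrite (N_tr _ _ _ HG); auto. lra. }
  assert (E5 : N dg / eps <= 4 * eps ^ 3).
  { unfold Rdiv. apply Rmult_le_reg_l with eps; auto.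
    replace (eps * (N dg * / eps)) with (N dg) by (field; apply Rgt_not_eq; lra).
    fold g in Hres. nra. }
  assert (0 <= N (ract mul inv f u)) by (apply N_nonneg, (fs_ract _ _ _ HG); auto).
  assert (0 <= N u) by (apply N_nonneg; auto).
  assert (0 <= N gam) by (apply N_nonneg; auto).
  split.
  - assert (eps / 2 * N u <= eps * N gam + 4 * eps ^ 3) by lra.
    apply Rmult_le_reg_l with (eps / 2). lra. nra.
  - assert (eps ^ 3 <= eps) by (assert (eps^2 <= 1) by nra; nra). nra. Qed.

End U.

Lemma count_zero {A} (P : A -> Prop) l : (forall x, In x l -> ~ P x) -> count_in P l = O.
Proof. unfold count_in. induction l; simpl; intros H; auto.
  unfold pb at 1. destruct excluded_middle_informative. exfalso; apply (H a); auto. apply IHl; auto. Qed.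

Section Misc.
Context {G : Type}.
Variables (mul : G -> G -> G) (inv : G -> G) (e : G).
Hypothesis HG : is_group mul inv e.
Variable D : G -> Prop.
Hypothesis HD : is_subgroup mul inv e D.

Lemma nonamen_extract : ~ amenable_subgroup mul inv D ->
  exists S eps0, (forall s, In s S -> D s) /\ 0 < eps0 /\
   forall F, NoDup F -> F <> [] -> (forall x, In x F -> D x) ->
   exists s, In s S /\ eps0 * INR (length F) <= INR (count_in (fun x => ~ In (mul s x) F) F
            + count_in (fun x => ~ In (mul (inv s) x) F) F).
Proof. intros Hn. unfold amenable_subgroup in Hn.
  apply not_all_ex_not in Hn. destruct Hn as [S Hn]. apply not_all_ex_not in Hn. destruct Hn as [eps0 Hn].
  apply imply_to_and in Hn. destruct Hn as [HS Hn]. apply imply_to_and in Hn. destruct Hn as [He Hn].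
  exists S, eps0. split; auto. split; auto. intros F NF FnE FD.
  apply NNPP; intro H. apply Hn. exists F. split; auto. split; auto. split; auto.
  intros s Hs. apply Rnot_le_lt. intro Hle. apply H. exists s; auto. Qed.

Lemma D_infinite : ~ amenable_subgroup mul inv D -> forall l : list G, exists d, D d /\ ~ In d l.
Proof. intros Hn l. apply NNPP; intro H. apply Hn. intros S eps HS He.
  assert (Hl : forall d, D d -> In d l). { intros d Hd. apply NNPP; intro Hd2. apply H; eauto. }
  set (F := nodup eqd (filter (fun x => pb (D x)) l)).
  assert (HF : forall x, In x F <-> D x).
  { intros x. unfold F. rewrite nodup_In, filter_In. unfold pb. split.
    - intros [_ H2]. destruct excluded_middle_informative; auto; discriminate.
    - intros Hx. split; auto. destruct excluded_middle_informative; auto. }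
  exists F. split; [apply NoDup_nodup|]. split.
  { intro E. assert (In e F) by (apply HF; destruct HD; auto). rewrite E in H0; auto. }
  split. { intros; apply HF; auto. }
  intros s Hs. rewrite !count_zero; simpl.
  - rewrite Rmult_comm. apply Rmult_lt_0_compat; auto. 
    destruct F eqn:EF. { exfalso. apply (proj2 (HF e)). destruct HD; auto. }
    change (length (g :: l0)) with (Datatypes.S (length l0)). apply lt_0_INR. lia.
  - intros x Hx Hn2. apply Hn2. apply HF. apply HF in Hx. destruct HD as [_ [H1 H2]]. apply H1; auto.
  - intros x Hx Hn2. apply Hn2. apply HF. apply HF in Hx. destruct HD as [_ [H1 H2]]. apply H1; auto. Qed.

Lemma D_lists : ~ amenable_subgroup mul inv D -> forall n, exists l, NoDup l /\ length l = n /\ forall x, In x l -> D x.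
Proof. intros Hn n. induction n. exists []; simpl; repeat split; auto. constructor. intros; contradiction.
  destruct IHn as [l [N1 [L1 D1]]]. destruct (D_infinite Hn l) as [d [Hd Hnd]].
  exists (d :: l). split. constructor; auto. split. simpl; auto. intros x [->|Hx]; auto. Qed.

End Misc.

Lemma sum_le_N {G} (v : G -> R) l : NoDup l -> finsupp v -> sumR (map (fun x => v x ^ 2) l) <= N v.
Proof. intros Nl Hv. rewrite <- sum_ind; auto. unfold N. apply fsum_le.
  - apply fs_mul_l, fs_sq; auto.
  - apply fs_sq; auto.
  - intros x. destruct (ind01 l x) as [-> | ->]. assert (0 <= v x ^ 2) by apply pow2_ge_0. lra. lra. Qed.

Lemma pt_le_N {G} (v : G -> R) g : finsupp v -> v g ^ 2 <= N v.
Proof. intros. pose proof (sum_le_N v [g]). simpl in H0. rewrite Rplus_0_r in H0. apply H0; auto.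
  constructor; auto; constructor. Qed.

Lemma cover_bound {G} (P : G -> Prop) (K : nat) :
  (forall l, NoDup l -> (forall x, In x l -> P x) -> (length l <= K)%nat) -> exists l, forall x, P x -> In x l.
Proof. intros H.
  assert (Hn : forall n, (exists l, NoDup l /\ length l = n /\ forall x, In x l -> P x) \/ exists l, forall x, P x -> In x l).
  { induction n. left; exists []; simpl; repeat split; auto. constructor. intros; contradiction.
    destruct IHn as [[l [N1 [L1 P1]]]|R]; auto.
    destruct (classic (forall x, P x -> In x l)) as [C|C]. right; eauto.
    apply not_all_ex_not in C. destruct C as [x C]. apply imply_to_and in C. destruct C.
    left. exists (x :: l). split. constructor; auto. split. simpl; auto. intros y [->|Hy]; auto. }
  destruct (Hn (S K)) as [[l [N1 [L1 P1]]]|R]; auto. specialize (H l N1 P1). lia. Qed.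

Lemma coeff_build {G} (kf : G -> Z) L g : NoDup L -> (forall x, kf x <> 0%Z -> In x L) ->
  coeff (map (fun x => (x, kf x)) L) g = kf g.
Proof. intros NL CL.
  assert (H : coeff (map (fun x => (x, kf x)) L) g = if in_dec eqd g L then kf g else 0%Z).
  { clear CL. induction NL; simpl. auto. unfold coeff in *; simpl. rewrite IHNL.
    unfold pb. destruct excluded_middle_informative as [E|E]; simpl in E.
    - subst x. destruct (in_dec eqd g l); [contradiction|]. destruct eqd; [|contradiction]. simpl. lia.
    - destruct eqd. subst; contradiction. simpl. destruct in_dec; lia. }
  rewrite H. destruct in_dec; auto. destruct (Z.eq_dec (kf g) 0); auto. exfalso; auto. Qed.

Lemma integral_val {G} (w : G -> R) (Mw : R) (x : G)
  (Hw : forall l, NoDup l -> sumR (map (fun g => w g ^ 2) l) <= Mw)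
  (Horb : forall n, exists l, NoDup l /\ length l = n /\ forall y, In y l -> exists k : Z, w y = w x - IZR k) :
  exists k, w x = IZR k.
Proof. set (r := w x). destruct (archimed r) as [H1 H2]. set (k0 := (up r - 1)%Z).
  assert (Hk0 : IZR k0 <= r < IZR k0 + 1). { unfold k0. rewrite minus_IZR. simpl. lra. }
  destruct (Req_dec r (IZR k0)) as [E|E]. exists k0; auto.
  set (eta := Rmin (r - IZR k0) (IZR k0 + 1 - r)).
  assert (Heta : 0 < eta). { unfold eta. apply Rmin_glb_lt. assert (IZR k0 < r) by (destruct Hk0 as [[]]; auto; congruence). lra. lra. }
  assert (Hfar : forall k, eta <= Rabs (r - IZR k)).
  { intros k. destruct (Z.le_gt_cases k k0) as [Hk|Hk].
    - apply IZR_le in Hk. assert (eta <= r - IZR k0) by apply Rmin_l. rewrite Rabs_right; lra.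
    - assert (Hk' : (k0 + 1 <= k)%Z) by lia. apply IZR_le in Hk'. rewrite plus_IZR in Hk'.
      assert (eta <= IZR k0 + 1 - r) by apply Rmin_r. rewrite Rabs_left1; lra. }
  destruct (archimed (Mw / eta ^ 2)) as [Ha _].
  assert (Hmw : 0 <= Mw). { specialize (Hw [] (NoDup_nil _)). simpl in Hw. auto. }
  set (n := Z.to_nat (up (Mw / eta ^ 2))).
  assert (Hn : Mw / eta ^ 2 < INR n).
  { unfold n. rewrite INR_IZR_INZ, Z2Nat.id; auto. apply le_IZR.
    assert (0 <= Mw / eta ^ 2) by (unfold Rdiv; apply Rmult_le_pos; auto; left; apply Rinv_0_lt_compat; nra). lra. }
  destruct (Horb n) as [l [Nl [Ll Pl]]].
  assert (INR n * eta ^ 2 <= sumR (map (fun g => w g ^ 2) l)).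
  { rewrite <- Ll, <- sumR_const. apply sumR_le. intros y Hy. destruct (Pl y Hy) as [k Hk].
    rewrite Hk. specialize (Hfar k). fold r.
    assert (0 <= eta) by lra. replace ((r - IZR k) ^ 2) with (Rabs (r - IZR k) ^ 2) by apply pow2_abs. 
    apply pow_incr; split; auto. }
  specialize (Hw l Nl).
  assert (Mw < INR n * eta ^ 2).
  { apply Rmult_lt_reg_r with (/ eta ^ 2). apply Rinv_0_lt_compat; nra.
    rewrite Rmult_assoc, Rinv_r, Rmult_1_r. auto. apply Rgt_not_eq; nra. }
  lra. Qed.

Lemma map_inj_nodup {A B} (h : A -> B) l : NoDup l -> (forall a b, h a = h b -> a = b) -> NoDup (map h l).
Proof. induction 1; simpl; intros Hi; constructor; auto.
  intro Hx. apply in_map_iff in Hx. destruct Hx as [y [E Hy]]. apply Hi in E. subst; auto. Qed.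

Lemma cv_sq u l : Un_cv u l -> Un_cv (fun n => u n ^ 2) (l ^ 2).
Proof. intros H. apply cv_ext with (fun n => u n * u n). intros; ring.
  replace (l ^ 2) with (l * l) by ring. apply cv_mult; auto. Qed.

Theorem proposition2p4
  (G : Type) (mul : G -> G -> G) (inv : G -> G) (e : G)
  (HG : is_group mul inv e) (Hcount : countably_infinite G)
  (D : G -> Prop) (HD : is_subgroup mul inv e D)
  (Hnonamen : ~ amenable_subgroup mul inv D)
  (f : ZG G)
  (Hf : forall v : G -> R, in_l2 v ->
          (forall g, l2_act mul inv v f g = 0%R) -> forall g, v g = 0%R)
  (c : G -> ZG G) (Hc : is_cocycle mul D c)
  (Hcf : is_coboundary mul D (fun d => zg_mul mul (c d) f)) :
  is_coboundary mul D c.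
Proof.
  destruct (nonamen_extract mul inv D Hnonamen) as [S [eps0 [HS [Heps0 Hiso]]]].
  destruct Hcount as [enum [_ Hsurj]].
  destruct Hcf as [b' Hb'].
  set (gam := fun d => cR (c d)).
  set (beta := cR b').
  set (Bv := ract mul inv (fstar inv f) beta).
  assert (Hgam : forall d, finsupp (gam d)) by (intros; apply fs_cR).
  assert (HBv : finsupp Bv) by (apply (fs_ract _ _ _ HG), fs_cR).
  assert (Hid : forall d, D d -> forall x, Aop mul inv f (gam d) x = Bv x - tr mul inv d Bv x).
  { intros d Hd x. unfold Aop, Bv.
    rewrite (ract_ext mul inv (fstar inv f) _ (fun z => 1 * beta z + (-1) * tr mul inv d beta z)).
    - rewrite ract_plus, !ract_scal, (ract_tr _ _ _ HG). ring.
    - intros z. unfold gam. rewrite <- (cR_mul _ _ _ HG). unfold cR at 1. rewrite (Hb' d Hd z).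
      fold (cR (zg_sub b' (zg_lact mul d b')) z). rewrite cR_sub, (cR_lact _ _ _ HG). unfold tr, beta. ring. }
  set (epsn := fun n : nat => / INR (Datatypes.S n)).
  assert (Hep : forall n, 0 < epsn n) by (intros; apply Rinv_0_lt_compat, lt_0_INR; lia).
  assert (Hep1 : forall n, epsn n <= 1).
  { intros n. unfold epsn. rewrite <- Rinv_1. apply Rinv_le_contravar. lra.
    rewrite S_INR. pose proof (pos_INR n). lra. }
  assert (Hepm : forall n m, (n <= m)%nat -> epsn m <= epsn n).
  { intros n m Hnm. unfold epsn. apply Rinv_le_contravar. apply lt_0_INR; lia. apply le_INR; lia. }
  assert (Hy : forall n, exists y, finsupp y /\ N (Res mul inv f (epsn n) Bv y) <= (epsn n)^4).
  { intros n. apply (gd_exists _ _ _ HG); auto. apply pow_lt; auto. }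
  set (ys := fun n => proj1_sig (constructive_indefinite_description _ (Hy n))).
  assert (Hys : forall n, finsupp (ys n) /\ N (Res mul inv f (epsn n) Bv (ys n)) <= (epsn n)^4).
  { intros n. unfold ys. destruct constructive_indefinite_description; simpl; auto. }
  assert (Hu : forall n d, D d ->
    N (fun x => gam d x - (ys n x - tr mul inv d (ys n) x)) <= 2 * N (gam d) + 8 /\
    N (ract mul inv f (fun x => gam d x - (ys n x - tr mul inv d (ys n) x))) <= epsn n * (N (gam d) + 4)).
  { intros n d Hd. destruct (Hys n) as [H1 H2].
    destruct (u_bound _ _ _ HG f (epsn n) (Hep n) (Hep1 n) Bv HBv d (gam d) (ys n) (Hgam d) H1 (Hid d Hd) H2) as [U1 U2].
    split; auto. assert (epsn n ^ 2 <= 1) by (pose proof (Hep n); pose proof (Hep1 n); nra). lra. }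
  set (Mb := Kgap S eps0 * sumR (map (fun s => 6 * N (gam s) + 16) S)).
  assert (HNy : forall n, N (ys n) <= Mb).
  { intros n. destruct (Hys n) as [Hfy _].
    eapply Rle_trans. apply (spectral _ _ _ HG D HD S HS eps0 Heps0 Hiso); auto.
    unfold Mb. apply Rmult_le_compat_l.
    { unfold Kgap. unfold Rdiv. apply Rmult_le_pos; [apply Rmult_le_pos|]; try (left; apply Rinv_0_lt_compat; auto).
      pose proof (pos_INR (length S)); lra. }
    apply sumR_le. intros s Hs.
    replace (fun x => ys n x - ys n (mul (inv s) x)) with
      (fun x => gam s x - (fun x => gam s x - (ys n x - tr mul inv s (ys n) x)) x).
    2:{ apply functional_extensionality; intros x; unfold tr; ring. }
    eapply Rle_trans. apply N_sub_le; auto. apply fs_sub; auto. apply fs_sub; auto. apply (fs_tr _ _ _ HG); auto.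
    destruct (Hu n s (HS s Hs)) as [U1 _]. lra. }
  assert (Hbd : forall n g, Rabs (ys n g) <= Mb + 1).
  { intros n g. pose proof (pt_le_N (ys n) g (proj1 (Hys n))). pose proof (HNy n).
    assert (Rabs (ys n g) <= 1 + ys n g ^ 2).
    { rewrite <- pow2_abs. pose proof (Rabs_pos (ys n g)). nra. }
    lra. }
  destruct (diag enum Hsurj ys (Mb + 1) Hbd) as [phi [Hphi [w Hw]]].
  assert (Hcob : forall d, D d -> forall x, gam d x = w x - w (mul (inv d) x)).
  { intros d Hd.
    set (ubar := fun x => gam d x - (w x - w (mul (inv d) x))).
    set (un := fun n x => gam d x - (ys n x - tr mul inv d (ys n) x)).
    assert (Hfun : forall n, finsupp (un n)).
    { intros n. unfold un. apply fs_sub; auto. apply fs_sub. apply (proj1 (Hys n)). apply (fs_tr _ _ _ HG), (proj1 (Hys n)). }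
    assert (Hcv : forall x, Un_cv (fun n => un (phi n) x) (ubar x)).
    { intros x. unfold un, ubar, tr. apply CV_minus. apply cv_const. apply CV_minus; auto. }
    assert (Hl2 : in_l2 ubar).
    { exists (2 * N (gam d) + 8). intros l Nl.
      apply (cv_le (fun n => sumR (map (fun g => un (phi n) g ^ 2) l))).
      - apply (cv_sumR (fun n g => un (phi n) g ^ 2)). intros g _. apply cv_sq; auto.
      - intros n. eapply Rle_trans. apply sum_le_N; auto. apply (Hu (phi n) d Hd). }
    assert (Hzero : forall g, l2_act mul inv ubar f g = 0).
    { intros g. set (L := l2_act mul inv ubar f g).
      assert (HL : Un_cv (fun n => ract mul inv f (un (phi n)) g) L).
      { unfold ract, l2_act, L. apply (cv_sumR (fun n p => un (phi n) (mul g (inv (fst p))) * IZR (snd p))).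
        intros p _. apply cv_mult; auto. apply cv_const. }
      set (C := N (gam d) + 4).
      assert (HC : 0 < C) by (unfold C; pose proof (N_nonneg (gam d) (Hgam d)); lra).
      assert (Hsm : forall eta, 0 < eta -> L ^ 2 <= eta).
      { intros eta Heta. apply (cv_le_ev (fun n => ract mul inv f (un (phi n)) g ^ 2)). apply cv_sq; auto.
        destruct (archimed (C / eta)) as [Ha _].
        exists (Z.to_nat (up (C / eta))). intros n Hn.
        eapply Rle_trans. apply pt_le_N. apply (fs_ract _ _ _ HG); auto.
        eapply Rle_trans. apply (Hu (phi n) d Hd). fold C.
        assert (epsn (phi n) <= epsn n) by (apply Hepm, SI_ge; auto).
        assert (Hk : C / eta < INR (Datatypes.S n)).
        { apply le_INR in Hn. rewrite INR_IZR_INZ, Z2Nat.id in Hn. rewrite S_INR. lra.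
          apply le_IZR. assert (0 <= C / eta) by (unfold Rdiv; apply Rmult_le_pos; [lra|left; apply Rinv_0_lt_compat; auto]). lra. }
        assert (epsn n * C <= eta).
        { assert (HX : 0 < INR (Datatypes.S n)) by (apply lt_0_INR; lia).
          assert (C < eta * INR (Datatypes.S n)).
          { replace C with (C / eta * eta) by (field; apply Rgt_not_eq; lra). nra. }
          unfold epsn. apply Rmult_le_reg_l with (INR (Datatypes.S n)); auto.
          rewrite <- Rmult_assoc, Rinv_r, Rmult_1_l. lra. apply Rgt_not_eq; lra. }
        pose proof (Hep (phi n)). nra. }
      destruct (Req_dec L 0) as [E|E]; auto. exfalso.
      assert (0 < L ^ 2) by (apply pow_lt_0_compat_pos || (assert (0 < L * L) by (apply Rsqr_pos_lt; auto); simpl; lra)).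
      specialize (Hsm (L ^ 2 / 2) ltac:(lra)). lra. }
    intros x. pose proof (Hf ubar Hl2 Hzero x). unfold ubar in H. lra. }
  assert (Hwl2 : forall l, NoDup l -> sumR (map (fun g => w g ^ 2) l) <= Mb).
  { intros l Nl. apply (cv_le (fun n => sumR (map (fun g => ys (phi n) g ^ 2) l))).
    - apply (cv_sumR (fun n g => ys (phi n) g ^ 2)). intros g _. apply cv_sq; auto.
    - intros n. eapply Rle_trans. apply sum_le_N; auto. apply (proj1 (Hys (phi n))). apply HNy. }
  assert (Hint : forall x, exists k, w x = IZR k).
  { intros x. apply (integral_val w Mb x Hwl2). intros n.
    destruct (D_lists mul inv e D HD Hnonamen n) as [l [Nl [Ll Dl]]].
    exists (map (fun d => mul (inv d) x) l). split; [|split].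
    - apply map_inj_nodup; auto. intros a b Hab.
      assert (inv a = inv b). { rewrite <- (g_rr' _ _ _ HG (inv a) x), Hab, (g_rr' _ _ _ HG); auto. }
      rewrite <- (g_invinv _ _ _ HG a), H, (g_invinv _ _ _ HG); auto.
    - rewrite length_map; auto.
    - intros y Hy0. apply in_map_iff in Hy0. destruct Hy0 as [d [<- Hd]].
      exists (coeff (c d) x). pose proof (Hcob d (Dl d Hd) x) as HH. unfold gam, cR in HH. lra. }
  set (kf := fun x => proj1_sig (constructive_indefinite_description _ (Hint x))).
  assert (Hkf : forall x, w x = IZR (kf x)).
  { intros x; unfold kf; destruct constructive_indefinite_description; auto. }
  destruct (cover_bound (fun x => kf x <> 0%Z) (Z.to_nat (up Mb))) as [l0 Hl0].
  { intros l Nl Pl. specialize (Hwl2 l Nl).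
    assert (INR (length l) <= Mb).
    { eapply Rle_trans; [|apply Hwl2]. rewrite <- (Rmult_1_r (INR (length l))), <- sumR_const. apply sumR_le. intros x Hx.
      rewrite Hkf. replace (IZR (kf x) ^ 2) with (IZR (kf x * kf x)) by (rewrite mult_IZR; ring). apply IZR_le. specialize (Pl x Hx). nia. }
    destruct (archimed Mb) as [Ha _].
    assert (0 <= Mb) by (pose proof (pos_INR (length l)); lra).
    apply INR_le. assert (INR (Z.to_nat (up Mb)) = IZR (up Mb)) by (rewrite INR_IZR_INZ, Z2Nat.id; auto; apply le_IZR; lra). lra. }
  set (L := nodup eqd l0).
  exists (map (fun x => (x, kf x)) L).
  intros d Hd g. apply eq_IZR. fold (cR (c d) g). fold (cR (zg_sub (map (fun x => (x, kf x)) L) (zg_lact mul d (map (fun x => (x, kf x)) L))) g).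
  rewrite cR_sub, (cR_lact _ _ _ HG). unfold cR. rewrite !coeff_build.
  - rewrite <- !Hkf. apply (Hcob d Hd g).
  - apply NoDup_nodup.
  - intros x Hx. apply nodup_In; auto.
  - apply NoDup_nodup.
  - intros x Hx. apply nodup_In; auto.
Qed.
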